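(* Let $p\ge q\ge 1$, real $c_{q+1},\dots,c_p$ (with $c_j=0$ for $j>p$), and \[ r(x) = 1 + \sum_{j=1}^{q}\frac{1}{j!}(-\mathrm{i}x)^j + \sum_{j=q+1}^{p} c_j(-\mathrm{i}x)^j . \] Define $S=(-1)^{q/2}\Big[\big(c_{q+1}-\tfrac{1}{(q+1)!}\big)-\big(c_{q+2}-\tfrac{1}{(q+2)!}\big)\Big]$ if $q$ is even and $S=(-1)^{(q+1)/2}\big(c_{q+1}-\tfrac{1}{(q+1)!}\big)$ if $q$ is odd. If $S<0$, then there exists $\eta_s>0$ such that $|r(x)|<1$ for all real $x$ with $0<x<\pi\eta_s$. If $S>0$, then there exists $\varepsilon>0$ such that $|r(x)|>1$ for all real $x$ with $0<x<\varepsilon$ (i.e. the scheme is unstable for arbitrarily small real $x$). *)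

(* Defs.v *)
From Stdlib Require Import Reals Arith.
Open Scope R_scope.

Record C := mkC { Cre : R; Cim : R }.

Definition RtoC (a : R) : C := mkC a 0.
Definition Cadd (z w : C) : C := mkC (Cre z + Cre w) (Cim z + Cim w).
Definition Cmul (z w : C) : C :=
  mkC (Cre z * Cre w - Cim z * Cim w) (Cre z * Cim w + Cim z * Cre w).
Fixpoint Cpow (z : C) (n : nat) : C :=
  match n with O => RtoC 1 | S m => Cmul z (Cpow z m) end.
Definition Cmod (z : C) : R := sqrt (Cre z ^ 2 + Cim z ^ 2).
Fixpoint Csum (f : nat -> C) (n : nat) : C :=
  match n with O => RtoC 0 | S m => Cadd (Csum f m) (f m) end.

Definition mix (x : R) : C := mkC 0 (- x).

Definition rstab (p q : nat) (c : nat -> R) (x : R) : C :=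
  Cadd (RtoC 1)
   (Cadd (Csum (fun k => Cmul (RtoC (/ INR (fact (k + 1)))) (Cpow (mix x) (k + 1))) q)
         (Csum (fun k => Cmul (RtoC (c (q + 1 + k)%nat)) (Cpow (mix x) (q + 1 + k))) (p - q))).

Definition cext (p : nat) (c : nat -> R) (j : nat) : R :=
  if Nat.leb j p then c j else 0.

Definition Sval (p q : nat) (c : nat -> R) : R :=
  if Nat.even q then
    (-1) ^ (q / 2) * ((cext p c (q + 1) - / INR (fact (q + 1)))
                      - (cext p c (q + 2) - / INR (fact (q + 2))))
  else
    (-1) ^ ((q + 1) / 2) * (cext p c (q + 1) - / INR (fact (q + 1))).

(* Main.v *)
Require Import Defs.
From Stdlib Require Import Reals Arith Lra Lia Psatz FunctionalExtensionality.
Open Scope R_scope.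

Definition ni := mkC 0 (-1).
Definition u k := Cpow ni k.

Lemma u_S k : u (S k) = mkC (Cim (u k)) (- Cre (u k)).
Proof. unfold u; simpl. destruct (Cpow ni k) as [a b]; unfold Cmul, ni; simpl; f_equal; ring. Qed.

Lemma pow_mix x k : Cpow (mix x) k = mkC (Cre (u k) * x^k) (Cim (u k) * x^k).
Proof.
  induction k.
  - simpl. unfold u, RtoC; simpl. f_equal; ring.
  - change (Cpow (mix x) (S k)) with (Cmul (mix x) (Cpow (mix x) k)).
    rewrite IHk, u_S. unfold Cmul, mix; simpl. f_equal; ring.
Qed.

Lemma u_bound k : Rabs (Cre (u k)) <= 1 /\ Rabs (Cim (u k)) <= 1.
Proof.
  induction k.
  - unfold u; simpl. rewrite Rabs_R1, Rabs_R0. lra.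
  - rewrite u_S; simpl. rewrite Rabs_Ropp. tauto.
Qed.

Lemma u_even m : u (2 * m) = mkC ((-1)^m) 0.
Proof.
  induction m.
  - unfold u; simpl. reflexivity.
  - replace (2 * S m)%nat with (S (S (2 * m))) by lia.
    rewrite !u_S, IHm. simpl. f_equal; ring.
Qed.

Lemma u_odd m : u (2 * m + 1) = mkC 0 (- (-1)^m).
Proof.
  replace (2 * m + 1)%nat with (S (2 * m)) by lia.
  rewrite u_S, u_even. simpl. reflexivity.
Qed.

Lemma term_re a j x : Cre (Cmul (RtoC a) (Cpow (mix x) j)) = a * Cre (u j) * x^j.
Proof. rewrite pow_mix. unfold Cmul, RtoC; simpl. ring. Qed.
Lemma term_im a j x : Cim (Cmul (RtoC a) (Cpow (mix x) j)) = a * Cim (u j) * x^j.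
Proof. rewrite pow_mix. unfold Cmul, RtoC; simpl. ring. Qed.

Definition Ob (k : nat) (f : R -> R) :=
  exists K, 0 <= K /\ forall x, 0 < x <= 1 -> Rabs (f x) <= K * x ^ k.

Lemma pow_le_weak x m j : 0 < x <= 1 -> (m <= j)%nat -> x ^ j <= x ^ m.
Proof.
  intros Hx Hmj.
  replace j with (m + (j - m))%nat by lia. rewrite pow_add.
  assert (0 <= x ^ m) by (apply pow_le; lra).
  assert (x ^ (j - m) <= 1).
  { rewrite <- (pow1 (j - m)). apply pow_incr. lra. }
  assert (0 <= x ^ (j - m)) by (apply pow_le; lra).
  nra.
Qed.

Lemma Ob_ext k f g : (forall x, 0 < x <= 1 -> f x = g x) -> Ob k f -> Ob k g.
Proof.
  intros H [K [HK HB]]. exists K; split; auto. intros x Hx. rewrite <- H; auto.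
Qed.

Lemma Ob_weak k l f : (k <= l)%nat -> Ob l f -> Ob k f.
Proof.
  intros Hkl [K [HK HB]]. exists K; split; auto. intros x Hx.
  eapply Rle_trans; [apply HB; auto|].
  apply Rmult_le_compat_l; auto. apply pow_le_weak; auto.
Qed.

Lemma Ob_plus k f g : Ob k f -> Ob k g -> Ob k (fun x => f x + g x).
Proof.
  intros [K1 [H1 B1]] [K2 [H2 B2]]. exists (K1 + K2); split; [lra|].
  intros x Hx. eapply Rle_trans; [apply Rabs_triang|].
  specialize (B1 x Hx). specialize (B2 x Hx). lra.
Qed.

Lemma Ob_opp k f : Ob k f -> Ob k (fun x => - f x).
Proof.
  intros [K [H B]]. exists K; split; auto. intros x Hx. rewrite Rabs_Ropp; auto.
Qed.

Lemma Ob_mult k l m f g : (m = k + l)%nat -> Ob k f -> Ob l g -> Ob m (fun x => f x * g x).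
Proof.
  intros -> [K1 [H1 B1]] [K2 [H2 B2]]. exists (K1 * K2); split; [nra|].
  intros x Hx. rewrite Rabs_mult, pow_add.
  specialize (B1 x Hx). specialize (B2 x Hx).
  assert (0 <= x ^ k) by (apply pow_le; lra).
  assert (0 <= x ^ l) by (apply pow_le; lra).
  pose proof (Rabs_pos (f x)). pose proof (Rabs_pos (g x)).
  replace (K1 * K2 * (x ^ k * x ^ l)) with ((K1 * x^k) * (K2 * x^l)) by ring.
  apply Rmult_le_compat; auto.
Qed.

Lemma Ob_const a : Ob 0 (fun _ => a).
Proof. exists (Rabs a); split; [apply Rabs_pos|]. intros; simpl; lra. Qed.

Lemma Ob_zero k : Ob k (fun _ => 0).
Proof. exists 0; split; [lra|]. intros; rewrite Rabs_R0; lra. Qed.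

Lemma Ob_pow k : Ob k (fun x => x ^ k).
Proof.
  exists 1; split; [lra|]. intros x Hx. rewrite Rabs_right. lra.
  apply Rle_ge, pow_le; lra.
Qed.

Lemma Ob_term m a b j : (m <= j)%nat -> Rabs b <= 1 -> Ob m (fun x => a * b * x ^ j).
Proof.
  intros Hmj Hb. exists (Rabs a); split; [apply Rabs_pos|].
  intros x Hx. rewrite !Rabs_mult.
  rewrite (Rabs_right (x ^ j)) by (apply Rle_ge, pow_le; lra).
  pose proof (pow_le_weak x m j Hx Hmj).
  assert (0 <= x ^ j) by (apply pow_le; lra).
  pose proof (Rabs_pos a). pose proof (Rabs_pos b).
  assert (Rabs a * Rabs b * x ^ j <= Rabs a * 1 * x ^ j).
  { apply Rmult_le_compat_r; auto. apply Rmult_le_compat_l; auto. }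
  nra.
Qed.

Lemma Csum_S_re f n : Cre (Csum f (S n)) = Cre (Csum f n) + Cre (f n).
Proof. reflexivity. Qed.
Lemma Csum_S_im f n : Cim (Csum f (S n)) = Cim (Csum f n) + Cim (f n).
Proof. reflexivity. Qed.

Lemma Csum_shift_re f n : Cre (Csum f (S n)) = Cre (f O) + Cre (Csum (fun k => f (S k)) n).
Proof.
  induction n.
  - simpl. ring.
  - rewrite Csum_S_re, IHn, Csum_S_re. ring.
Qed.
Lemma Csum_shift_im f n : Cim (Csum f (S n)) = Cim (f O) + Cim (Csum (fun k => f (S k)) n).
Proof.
  induction n.
  - simpl. ring.
  - rewrite Csum_S_im, IHn, Csum_S_im. ring.
Qed.

Lemma Ob_Csum_re m F n : (forall k, Ob m (fun x => Cre (F k x))) ->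
  Ob m (fun x => Cre (Csum (fun k => F k x) n)).
Proof.
  intros H. induction n.
  - simpl. apply Ob_zero.
  - eapply Ob_ext; [intros x Hx; symmetry; apply Csum_S_re|].
    apply Ob_plus; auto.
Qed.
Lemma Ob_Csum_im m F n : (forall k, Ob m (fun x => Cim (F k x))) ->
  Ob m (fun x => Cim (Csum (fun k => F k x) n)).
Proof.
  intros H. induction n.
  - simpl. apply Ob_zero.
  - eapply Ob_ext; [intros x Hx; symmetry; apply Csum_S_im|].
    apply Ob_plus; auto.
Qed.

Definition T k x := Cmul (RtoC (/ INR (fact (k + 1)))) (Cpow (mix x) (k + 1)).
Definition gB n x := Cadd (RtoC 1) (Csum (fun k => T k x) n).

Lemma gB_S_re n x : Cre (gB (S n) x) = Cre (gB n x) + Cre (T n x).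
Proof. unfold gB. simpl. ring. Qed.
Lemma gB_S_im n x : Cim (gB (S n) x) = Cim (gB n x) + Cim (T n x).
Proof. unfold gB. simpl. ring. Qed.

Lemma dmono a k x : derivable_pt_lim (fun y => a * y ^ k) x (a * (INR k * x ^ pred k)).
Proof. apply (derivable_pt_lim_scal (fun y => y ^ k)). apply derivable_pt_lim_pow. Qed.

Lemma fact_S_INR n : INR (fact (S n)) = INR (S n) * INR (fact n).
Proof. change (fact (S n)) with (S n * fact n)%nat. apply mult_INR. Qed.

Lemma dT_re n x : derivable_pt_lim (fun x => Cre (T (S n) x)) x (Cim (T n x)).
Proof.
  replace (fun x => Cre (T (S n) x)) with
    (fun y => (/ INR (fact (S n + 1)) * Cre (u (S n + 1))) * y ^ (S n + 1)).
  2:{ apply functional_extensionality; intro y. unfold T. rewrite term_re. ring. }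
  replace (Cim (T n x)) with
    ((/ INR (fact (S n + 1)) * Cre (u (S n + 1))) * (INR (S n + 1) * x ^ pred (S n + 1))).
  { apply dmono. }
  unfold T. rewrite term_im.
  replace (S n + 1)%nat with (S (n + 1)) by lia.
  rewrite u_S, fact_S_INR. simpl Cre. simpl pred.
  pose proof (INR_fact_neq_0 (n + 1)).
  assert (INR (S (n + 1)) <> 0) by (apply not_0_INR; lia).
  field. auto.
Qed.

Lemma dT_im n x : derivable_pt_lim (fun x => Cim (T (S n) x)) x (- Cre (T n x)).
Proof.
  replace (fun x => Cim (T (S n) x)) with
    (fun y => (/ INR (fact (S n + 1)) * Cim (u (S n + 1))) * y ^ (S n + 1)).
  2:{ apply functional_extensionality; intro y. unfold T. rewrite term_im. ring. }
  replace (- Cre (T n x)) with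
    ((/ INR (fact (S n + 1)) * Cim (u (S n + 1))) * (INR (S n + 1) * x ^ pred (S n + 1))).
  { apply dmono. }
  unfold T. rewrite term_re.
  replace (S n + 1)%nat with (S (n + 1)) by lia.
  rewrite u_S, fact_S_INR. simpl Cim. simpl pred.
  pose proof (INR_fact_neq_0 (n + 1)).
  assert (INR (S (n + 1)) <> 0) by (apply not_0_INR; lia).
  field. auto.
Qed.

Lemma dgB_re n x : derivable_pt_lim (fun x => Cre (gB (S n) x)) x (Cim (gB n x)).
Proof.
  induction n.
  - replace (fun x => Cre (gB 1 x)) with (fun y => (/ INR (fact 1) * Cre (u 1)) * y ^ 1 + 1).
    2:{ apply functional_extensionality; intro y. rewrite gB_S_re. unfold T. rewrite term_re.
        unfold gB. simpl. ring. }
    replace (Cim (gB 0 x)) with ((/ INR (fact 1) * Cre (u 1)) * (INR 1 * x ^ pred 1) + 0).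
    2:{ unfold gB, u. simpl. ring. }
    apply derivable_pt_lim_plus. apply dmono. apply derivable_pt_lim_const.
  - replace (fun x => Cre (gB (S (S n)) x)) with (fun y => Cre (gB (S n) y) + Cre (T (S n) y)).
    2:{ apply functional_extensionality; intro y. rewrite (gB_S_re (S n)). ring. }
    rewrite gB_S_im. apply derivable_pt_lim_plus; auto. apply dT_re.
Qed.

Lemma dgB_im n x : derivable_pt_lim (fun x => Cim (gB (S n) x)) x (- Cre (gB n x)).
Proof.
  induction n.
  - replace (fun x => Cim (gB 1 x)) with (fun y => (/ INR (fact 1) * Cim (u 1)) * y ^ 1 + 0).
    2:{ apply functional_extensionality; intro y. rewrite gB_S_im. unfold T. rewrite term_im.
        unfold gB. simpl. ring. }
    replace (- Cre (gB 0 x)) with ((/ INR (fact 1) * Cim (u 1)) * (INR 1 * x ^ pred 1) + 0).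
    2:{ unfold gB, u. simpl. field. }
    apply derivable_pt_lim_plus. apply dmono. apply derivable_pt_lim_const.
  - replace (fun x => Cim (gB (S (S n)) x)) with (fun y => Cim (gB (S n) y) + Cim (T (S n) y)).
    2:{ apply functional_extensionality; intro y. rewrite (gB_S_im (S n)). ring. }
    rewrite gB_S_re. replace (- (Cre (gB n x) + Cre (T n x))) with (- Cre (gB n x) + - Cre (T n x)) by ring.
    apply derivable_pt_lim_plus; auto. apply dT_im.
Qed.

Lemma gB0 n : Cre (gB n 0) = 1 /\ Cim (gB n 0) = 0.
Proof.
  induction n.
  - unfold gB; simpl; split; ring.
  - rewrite gB_S_re, gB_S_im. unfold T. rewrite term_re, term_im.
    replace (n+1)%nat with (S n) by lia. destruct IHn as [H1 H2]. rewrite H1, H2. simpl. split; ring.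
Qed.

Lemma uR1 k : Cre (u (k+1)) = Cim (u k).
Proof. replace (k+1)%nat with (S k) by lia. rewrite u_S. reflexivity. Qed.
Lemma uR2 k : Cim (u (k+1)) = - Cre (u k).
Proof. replace (k+1)%nat with (S k) by lia. rewrite u_S. reflexivity. Qed.
Lemma uR3 k : Cre (u (k+2)) = - Cre (u k).
Proof. replace (k+2)%nat with (S (S k)) by lia. rewrite !u_S. reflexivity. Qed.
Lemma fF1 k : INR (fact (k+1)) = INR (k+1) * INR (fact k).
Proof. replace (k+1)%nat with (S k) by lia. apply fact_S_INR. Qed.
Lemma fF2 k : INR (fact (k+2)) = INR (k+2) * INR (k+1) * INR (fact k).
Proof. replace (k+2)%nat with (S (k + 1)) by lia. rewrite fact_S_INR, fF1.
  replace (S (k+1)) with (k+2)%nat by lia. ring. Qed.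

Lemma gB_split_re m x : Cre (gB (S m) x) = 1 + Cre (T 0 x) + Cre (Csum (fun k => T (S k) x) m).
Proof. unfold gB. cbn [Cre Cadd RtoC]. rewrite (Csum_shift_re (fun k => T k x)). ring. Qed.
Lemma gB_split_im m x : Cim (gB (S m) x) = Cim (T 0 x) + Cim (Csum (fun k => T (S k) x) m).
Proof. unfold gB. cbn [Cim Cadd RtoC]. rewrite (Csum_shift_im (fun k => T k x)). ring. Qed.
Lemma T0_re x : Cre (T 0 x) = 0.
Proof. unfold T. rewrite term_re. unfold u. simpl. ring. Qed.
Lemma T0_im x : Cim (T 0 x) = - x.
Proof. unfold T. rewrite term_im. unfold u. simpl. field. Qed.

Lemma EB1 m : Ob 2 (fun x => Cre (gB (S m) x) - 1).
Proof.
  apply (Ob_ext 2 (fun x => Cre (Csum (fun k => T (S k) x) m))).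
  { intros x Hx. rewrite gB_split_re, T0_re. ring. }
  apply (Ob_Csum_re 2 (fun k x => T (S k) x)). intro k.
  apply (Ob_ext 2 (fun x => / INR (fact (S k + 1)) * Cre (u (S k + 1)) * x ^ (S k + 1))).
  { intros x Hx; unfold T; rewrite term_re; reflexivity. }
  apply Ob_term; [lia| apply u_bound].
Qed.

Lemma EB2 m : Ob 2 (fun x => Cim (gB (S m) x) + x).
Proof.
  apply (Ob_ext 2 (fun x => Cim (Csum (fun k => T (S k) x) m))).
  { intros x Hx. rewrite gB_split_im, T0_im. ring. }
  apply (Ob_Csum_im 2 (fun k x => T (S k) x)). intro k.
  apply (Ob_ext 2 (fun x => / INR (fact (S k + 1)) * Cim (u (S k + 1)) * x ^ (S k + 1))).
  { intros x Hx; unfold T; rewrite term_im; reflexivity. }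
  apply Ob_term; [lia| apply u_bound].
Qed.

Definition alpha q := -2 * / INR (fact (q+1)) * Cre (u (q+1)).
Definition beta q := 2 * Cre (u (q+2)) * (/ INR (fact (q+1)) - / INR (fact (q+2))).
Definition hfun q x := (Cre (gB q x) * Cre (gB q x) + Cim (gB q x) * Cim (gB q x) - 1)
   - alpha q * x^(q+1) - beta q * x^(q+2).

Definition hder m x :=
  ((Cim (gB m x) * Cre (gB (S m) x) + Cre (gB (S m) x) * Cim (gB m x)) +
   (- Cre (gB m x) * Cim (gB (S m) x) + Cim (gB (S m) x) * - Cre (gB m x)) - 0
   - alpha (S m) * (INR (S m + 1) * x ^ pred (S m + 1)))
   - beta (S m) * (INR (S m + 2) * x ^ pred (S m + 2)).

Lemma dh m x : derivable_pt_lim (hfun (S m)) x (hder m x).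
Proof.
  pose proof (dgB_re m x) as d1. pose proof (dgB_im m x) as d2.
  pose proof (derivable_pt_lim_plus _ _ x _ _ (derivable_pt_lim_mult _ _ x _ _ d1 d1)
     (derivable_pt_lim_mult _ _ x _ _ d2 d2)) as dg.
  pose proof (derivable_pt_lim_minus _ _ x _ _
    (derivable_pt_lim_minus _ _ x _ _
      (derivable_pt_lim_minus _ _ x _ _ dg (derivable_pt_lim_const 1 x))
      (dmono (alpha (S m)) (S m + 1) x)) (dmono (beta (S m)) (S m + 2) x)) as d.
  exact d.
Qed.

Lemma hder_eq m x : hder m x = 2 * / INR (fact (S m)) * x ^ (S m) *
   (- Cim (u (S m)) * (Cre (gB (S m) x) - 1) + Cre (u (S m)) * (Cim (gB (S m) x) + x)).
Proof.
  unfold hder, alpha, beta.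
  assert (HR : Cre (gB m x) = Cre (gB (S m) x) - Cre (T m x)) by (rewrite gB_S_re; ring).
  assert (HI : Cim (gB m x) = Cim (gB (S m) x) - Cim (T m x)) by (rewrite gB_S_im; ring).
  rewrite (uR1 (S m)), (uR3 (S m)), (fF1 (S m)), (fF2 (S m)).
  rewrite HR, HI. unfold T. rewrite term_re, term_im.
  replace (m + 1)%nat with (S m) by lia.
  replace (pred (S m + 1)) with (S m) by lia.
  replace (pred (S m + 2)) with (S m + 1)%nat by lia.
  rewrite pow_add. rewrite !plus_INR. simpl (INR 1). simpl (INR 2).
  pose proof (INR_fact_neq_0 (S m)). pose proof (pos_INR (S m)).
  set (A := Cre (gB (S m) x)). set (B := Cim (gB (S m) x)).
  set (F := INR (fact (S m))). set (N := INR (S m)).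
  field. split; [exact H| unfold N; split; lra].
Qed.

Lemma Ob_hder m : Ob (S m + 2) (hder m).
Proof.
  apply (Ob_ext _ (fun x => (2 * / INR (fact (S m)) * 1 * x ^ (S m)) *
     (- Cim (u (S m)) * (Cre (gB (S m) x) - 1) + Cre (u (S m)) * (Cim (gB (S m) x) + x)))).
  { intros x Hx. rewrite hder_eq. ring. }
  apply Ob_mult with (k := S m) (l := 2%nat); [reflexivity| |].
  - apply Ob_term; [lia| rewrite Rabs_R1; lra].
  - apply Ob_plus.
    + apply (Ob_mult 0 2 2 (fun _ => - Cim (u (S m))) (fun x => Cre (gB (S m) x) - 1));
        [reflexivity| apply Ob_const| apply EB1].
    + apply (Ob_mult 0 2 2 (fun _ => Cre (u (S m))) (fun x => Cim (gB (S m) x) + x));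
        [reflexivity| apply Ob_const| apply EB2].
Qed.

Lemma Ob_h m : Ob (S m + 3) (hfun (S m)).
Proof.
  destruct (Ob_hder m) as [K [HK HB]].
  exists K; split; auto. intros x Hx.
  destruct (MVT_cor2 (hfun (S m)) (hder m) 0 x) as [c [Hc1 Hc2]]; [lra| intros; apply dh|].
  assert (H0 : hfun (S m) 0 = 0).
  { unfold hfun. destruct (gB0 (S m)) as [-> ->]. rewrite !pow_i by lia. ring. }
  rewrite H0 in Hc1. replace (hfun (S m) x) with (hder m c * x) by lra.
  rewrite Rabs_mult, (Rabs_right x) by lra.
  assert (Hb := HB c ltac:(lra)).
  assert (c ^ (S m + 2) <= x ^ (S m + 2)) by (apply pow_incr; lra).
  replace (S m + 3)%nat with ((S m + 2) + 1)%nat by lia. rewrite pow_add. simpl (x ^ 1).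
  pose proof (Rabs_pos (hder m c)).
  assert (Rabs (hder m c) <= K * x ^ (S m + 2)) by nra.
  nra.
Qed.

Definition W p q c x := Csum (fun k => Cmul (RtoC (c (q + 1 + k)%nat)) (Cpow (mix x) (q + 1 + k))) (p - q).

Lemma rstab_re p q c x : Cre (rstab p q c x) = Cre (gB q x) + Cre (W p q c x).
Proof. unfold rstab, gB, W, T. cbn [Cre Cadd RtoC]. ring. Qed.
Lemma rstab_im p q c x : Cim (rstab p q c x) = Cim (gB q x) + Cim (W p q c x).
Proof. unfold rstab, gB, W, T. cbn [Cim Cadd RtoC]. ring. Qed.

Lemma cext_in p c j : (j <= p)%nat -> cext p c j = c j.
Proof. intros H. unfold cext. apply Nat.leb_le in H. rewrite H. reflexivity. Qed.
Lemma cext_out p c j : (p < j)%nat -> cext p c j = 0.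
Proof. intros H. unfold cext. apply Nat.leb_gt in H. rewrite H. reflexivity. Qed.

Lemma WO_re p q c : Ob (q + 1) (fun x => Cre (W p q c x)).
Proof.
  unfold W. apply (Ob_Csum_re _ (fun k x => Cmul (RtoC (c (q + 1 + k)%nat)) (Cpow (mix x) (q + 1 + k)))).
  intro k. apply (Ob_ext _ (fun x => c (q+1+k)%nat * Cre (u (q+1+k)) * x ^ (q+1+k))).
  { intros; rewrite term_re; reflexivity. }
  apply Ob_term; [lia| apply u_bound].
Qed.
Lemma WO_im p q c : Ob (q + 1) (fun x => Cim (W p q c x)).
Proof.
  unfold W. apply (Ob_Csum_im _ (fun k x => Cmul (RtoC (c (q + 1 + k)%nat)) (Cpow (mix x) (q + 1 + k)))).
  intro k. apply (Ob_ext _ (fun x => c (q+1+k)%nat * Cim (u (q+1+k)) * x ^ (q+1+k))).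
  { intros; rewrite term_im; reflexivity. }
  apply Ob_term; [lia| apply u_bound].
Qed.

Lemma DW_re p q c : (q <= p)%nat ->
  Ob (q + 3) (fun x => Cre (W p q c x) - cext p c (q+1) * Cre (u (q+1)) * x ^ (q+1)
                       - cext p c (q+2) * Cre (u (q+2)) * x ^ (q+2)).
Proof.
  intros Hpq. unfold W. destruct (p - q)%nat as [|[|n]] eqn:E.
  - rewrite !cext_out by lia.
    apply (Ob_ext _ (fun _ => 0)); [intros; simpl; ring| apply Ob_zero].
  - rewrite cext_in by lia. rewrite (cext_out p c (q+2)) by lia.
    apply (Ob_ext _ (fun _ => 0)); [|apply Ob_zero].
    intros x Hx. rewrite Csum_S_re. simpl (Csum _ 0). rewrite term_re.
    rewrite Nat.add_0_r. simpl. ring.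
  - rewrite !cext_in by lia.
    apply (Ob_ext _ (fun x => Cre (Csum (fun k => Cmul (RtoC (c (q + 1 + S (S k))%nat))
                                  (Cpow (mix x) (q + 1 + S (S k)))) n))).
    { intros x Hx. rewrite Csum_shift_re. rewrite Csum_shift_re.
      rewrite !term_re. replace (q + 1 + 0)%nat with (q+1)%nat by lia.
      replace (q + 1 + 1)%nat with (q+2)%nat by lia. ring. }
    apply (Ob_Csum_re _ (fun k x => Cmul (RtoC (c (q + 1 + S (S k))%nat)) (Cpow (mix x) (q + 1 + S (S k))))).
    intro k. apply (Ob_ext _ (fun x => c (q+1+S (S k))%nat * Cre (u (q+1+S (S k))) * x ^ (q+1+S (S k)))).
    { intros; rewrite term_re; reflexivity. }
    apply Ob_term; [lia| apply u_bound].
Qed.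

Lemma DW_im p q c : (q <= p)%nat ->
  Ob (q + 3) (fun x => Cim (W p q c x) - cext p c (q+1) * Cim (u (q+1)) * x ^ (q+1)
                       - cext p c (q+2) * Cim (u (q+2)) * x ^ (q+2)).
Proof.
  intros Hpq. unfold W. destruct (p - q)%nat as [|[|n]] eqn:E.
  - rewrite !cext_out by lia.
    apply (Ob_ext _ (fun _ => 0)); [intros; simpl; ring| apply Ob_zero].
  - rewrite cext_in by lia. rewrite (cext_out p c (q+2)) by lia.
    apply (Ob_ext _ (fun _ => 0)); [|apply Ob_zero].
    intros x Hx. rewrite Csum_S_im. simpl (Csum _ 0). rewrite term_im.
    rewrite Nat.add_0_r. simpl. ring.
  - rewrite !cext_in by lia.
    apply (Ob_ext _ (fun x => Cim (Csum (fun k => Cmul (RtoC (c (q + 1 + S (S k))%nat))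
                                  (Cpow (mix x) (q + 1 + S (S k)))) n))).
    { intros x Hx. rewrite Csum_shift_im. rewrite Csum_shift_im.
      rewrite !term_im. replace (q + 1 + 0)%nat with (q+1)%nat by lia.
      replace (q + 1 + 1)%nat with (q+2)%nat by lia. ring. }
    apply (Ob_Csum_im _ (fun k x => Cmul (RtoC (c (q + 1 + S (S k))%nat)) (Cpow (mix x) (q + 1 + S (S k))))).
    intro k. apply (Ob_ext _ (fun x => c (q+1+S (S k))%nat * Cim (u (q+1+S (S k))) * x ^ (q+1+S (S k)))).
    { intros; rewrite term_im; reflexivity. }
    apply Ob_term; [lia| apply u_bound].
Qed.

Definition Acoef1 p q c := 2 * Cre (u (q+1)) * (cext p c (q+1) - / INR (fact (q+1))).
Definition Acoef2 p q c := 2 * Cre (u (q+2)) *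
   ((cext p c (q+2) - / INR (fact (q+2))) - (cext p c (q+1) - / INR (fact (q+1)))).

Lemma main_Ob m p c : (S m <= p)%nat ->
  Ob (S m + 3) (fun x => Cre (rstab p (S m) c x) ^ 2 + Cim (rstab p (S m) c x) ^ 2 - 1
     - Acoef1 p (S m) c * x ^ (S m + 1) - Acoef2 p (S m) c * x ^ (S m + 2)).
Proof.
  intros Hpq. set (q := S m).
  set (c1 := cext p c (q+1)). set (c2 := cext p c (q+2)).
  apply (Ob_ext _ (fun x => hfun q x + 2 * (
      (Cre (W p q c x) - c1 * Cre (u (q+1)) * x ^ (q+1) - c2 * Cre (u (q+2)) * x ^ (q+2))
      + (Cre (gB q x) - 1) * Cre (W p q c x) + (Cim (gB q x) + x) * Cim (W p q c x)
      - x * (Cim (W p q c x) - c1 * Cim (u (q+1)) * x ^ (q+1) - c2 * Cim (u (q+2)) * x ^ (q+2))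
      - c2 * Cim (u (q+2)) * x ^ (q+3))
      + Cre (W p q c x) * Cre (W p q c x) + Cim (W p q c x) * Cim (W p q c x))).
  { intros x Hx. rewrite rstab_re, rstab_im. unfold hfun, alpha, beta, Acoef1, Acoef2.
    fold c1 c2.
    assert (Hr : Cre (u (q+2)) = Cim (u (q+1))).
    { replace (q+2)%nat with (q+1+1)%nat by lia. apply uR1. }
    rewrite Hr.
    assert (P2 : x ^ (q+2) = x ^ (q+1) * x).
    { replace (q+2)%nat with ((q+1)+1)%nat by lia. rewrite pow_add. simpl. ring. }
    assert (P3 : x ^ (q+3) = x ^ (q+1) * x * x).
    { replace (q+3)%nat with ((q+1)+2)%nat by lia. rewrite pow_add. simpl. ring. }
    rewrite P2, P3. ring. }
  apply Ob_plus; [apply Ob_plus; [apply Ob_plus|]|].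
  - apply Ob_h.
  - apply (Ob_mult 0 (q+3) (q+3) (fun _ => 2)); [reflexivity| apply Ob_const|].
    apply Ob_plus; [apply Ob_plus; [apply Ob_plus; [apply Ob_plus|]|]|].
    + apply DW_re. exact Hpq.
    + apply Ob_mult with (k := 2%nat) (l := (q+1)%nat); [lia| apply EB1| apply WO_re].
    + apply Ob_mult with (k := 2%nat) (l := (q+1)%nat); [lia| apply EB2| apply WO_im].
    + apply Ob_opp. apply (Ob_weak _ (1 + (q+3))); [lia|].
      apply Ob_mult with (k := 1%nat) (l := (q+3)%nat); [lia| apply (Ob_ext 1 (fun x => x ^ 1)); [intros; simpl; ring| apply Ob_pow]| apply DW_im; exact Hpq].
    + apply Ob_opp. apply Ob_term; [lia| apply u_bound].
  - apply (Ob_weak _ ((q+1) + (q+1))); [lia|].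
    apply Ob_mult with (k := (q+1)%nat) (l := (q+1)%nat); [lia| apply WO_re| apply WO_re].
  - apply (Ob_weak _ ((q+1) + (q+1))); [lia|].
    apply Ob_mult with (k := (q+1)%nat) (l := (q+1)%nat); [lia| apply WO_im| apply WO_im].
Qed.

Lemma sign_lemma (F : R -> R) k S : Ob (k+1) (fun x => F x - 2 * S * x ^ k) ->
  (S > 0 -> exists eps, 0 < eps /\ forall x, 0 < x < eps -> F x > 0) /\
  (S < 0 -> exists eps, 0 < eps /\ forall x, 0 < x < eps -> F x < 0).
Proof.
  intros [K [HK HB]].
  assert (key : S <> 0 -> exists eps, 0 < eps /\ forall x, 0 < x < eps ->
            Rabs (F x - 2 * S * x ^ k) < Rabs S * x ^ k /\ 0 < x ^ k).
  { intros HS. pose proof (Rabs_pos_lt S HS) as HaS.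
    exists (Rmin 1 (Rabs S / (K + 1))). split.
    { apply Rmin_pos; [lra| apply Rdiv_lt_0_compat; lra]. }
    intros x [Hx1 Hx2].
    assert (Hx1' : x <= 1) by (pose proof (Rmin_l 1 (Rabs S / (K+1))); lra).
    assert (Hx3 : x < Rabs S / (K+1)) by (pose proof (Rmin_r 1 (Rabs S / (K+1))); lra).
    assert (Hx4 : x * (K + 1) < Rabs S).
    { apply (Rmult_lt_compat_r (K+1)) in Hx3; [|lra].
      unfold Rdiv in Hx3. rewrite Rmult_assoc, Rinv_l in Hx3 by lra. lra. }
    assert (HX : 0 < x ^ k) by (apply pow_lt; lra).
    specialize (HB x (conj Hx1 Hx1')). rewrite pow_add in HB. simpl (x ^ 1) in HB.
    split; [|exact HX].
    assert (Kx : K * x < Rabs S) by nra.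
    assert (x ^ k * (K * x) < x ^ k * Rabs S) by (apply Rmult_lt_compat_l; lra).
    eapply Rle_lt_trans; [exact HB|]. nra. }
  split.
  - intros HS. destruct (key ltac:(lra)) as [eps [He H]]. exists eps; split; auto.
    intros x Hx. destruct (H x Hx) as [H1 H2]. rewrite (Rabs_right S) in H1 by lra.
    apply Rabs_def2 in H1. nra.
  - intros HS. destruct (key ltac:(lra)) as [eps [He H]]. exists eps; split; auto.
    intros x Hx. destruct (H x Hx) as [H1 H2]. rewrite (Rabs_left S) in H1 by lra.
    apply Rabs_def2 in H1. nra.
Qed.

Lemma parity m p c : (S m <= p)%nat -> exists k,
  Ob (k+1) (fun x => (Cre (rstab p (S m) c x) ^ 2 + Cim (rstab p (S m) c x) ^ 2 - 1)
                      - 2 * Sval p (S m) c * x ^ k).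
Proof.
  intros Hpq. pose proof (main_Ob m p c Hpq) as HO.
  destruct (Nat.Even_or_Odd (S m)) as [[m' Hm] | [m' Hm]].
  - assert (HA1 : Acoef1 p (S m) c = 0).
    { unfold Acoef1. rewrite Hm, u_odd. simpl Cre. ring. }
    assert (HA2 : Acoef2 p (S m) c = 2 * Sval p (S m) c).
    { unfold Acoef2, Sval. rewrite Hm, Nat.even_even.
      replace (2 * m' / 2)%nat with m' by (rewrite Nat.mul_comm, Nat.div_mul; lia).
      replace (2 * m' + 2)%nat with (2 * S m')%nat by lia. rewrite u_even.
      simpl Cre. simpl pow. ring. }
    exists (S m + 2)%nat. replace (S m + 2 + 1)%nat with (S m + 3)%nat by lia.
    eapply Ob_ext; [|exact HO]. intros x Hx. rewrite HA1, HA2. ring.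
  - assert (HA2 : Acoef2 p (S m) c = 0).
    { unfold Acoef2. rewrite Hm.
      replace (2 * m' + 1 + 2)%nat with (2 * S m' + 1)%nat by lia. rewrite u_odd.
      simpl Cre. ring. }
    assert (HA1 : Acoef1 p (S m) c = 2 * Sval p (S m) c).
    { unfold Acoef1, Sval. rewrite Hm, Nat.even_odd.
      replace ((2 * m' + 1 + 1) / 2)%nat with (S m') by
        (replace (2 * m' + 1 + 1)%nat with (S m' * 2)%nat by lia; rewrite Nat.div_mul; lia).
      replace (2 * m' + 1 + 1)%nat with (2 * S m')%nat by lia. rewrite u_even.
      simpl Cre. simpl pow. ring. }
    exists (S m + 1)%nat.
    apply (Ob_weak _ (S m + 3)); [lia|].
    eapply Ob_ext; [|exact HO]. intros x Hx. rewrite HA1, HA2. ring.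
Qed.

Theorem mainTheorem2 (p q : nat) (c : nat -> R) (hq : (1 <= q)%nat) (hpq : (q <= p)%nat) :
  (Sval p q c < 0 ->
     exists eta_s : R, 0 < eta_s /\
       forall x : R, 0 < x < PI * eta_s -> Cmod (rstab p q c x) < 1) /\
  (Sval p q c > 0 ->
     exists eps : R, 0 < eps /\
       forall x : R, 0 < x < eps -> Cmod (rstab p q c x) > 1).
Proof.
  destruct q as [|m]; [lia|].
  destruct (parity m p c hpq) as [k Hk].
  destruct (sign_lemma _ k _ Hk) as [Hpos Hneg].
  split.
  - intros HS. destruct (Hneg HS) as [eps [He H]].
    exists (eps / PI). split; [apply Rdiv_lt_0_compat; [lra| apply PI_RGT_0]|].
    intros x Hx. replace (PI * (eps / PI)) with eps in Hx by (field; apply PI_neq0).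
    specialize (H x Hx). unfold Cmod. rewrite <- sqrt_1.
    apply sqrt_lt_1; [| lra | lra].
    pose proof (pow2_ge_0 (Cre (rstab p (S m) c x))).
    pose proof (pow2_ge_0 (Cim (rstab p (S m) c x))). lra.
  - intros HS. destruct (Hpos HS) as [eps [He H]].
    exists eps. split; auto. intros x Hx.
    specialize (H x Hx). unfold Cmod. rewrite <- sqrt_1.
    apply sqrt_lt_1; lra.
Qed.
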